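(* Let $S$ be any connected shape whose nodes occupy $l$ rows and $w$ columns of the grid. Then, in the adjacency graph model with cycle-breaking growth processes and neighbor handover allowed, there is a growth process that grows $S$ from a single node in $O(\log l+\log w)$ time steps.
   Context: Shapes. Grid points are integer pairs $(x,y)$; two grid points are adjacent if they are at orthogonal (Manhattan) distance $1$. A shape $S=(V,E)$ is a finite connected graph whose nodes occupy distinct grid points and whose edges join only pairs of nodes occupying adjacent points; shapes are considered up to translation. The adjacency closure $AC(S)$ is obtained from $S$ by adding an edge between every pair of adjacent nodes that are not yet joined. Growth operations. One node, the anchor $u_0$, is stationary; other nodes move relative to it. A growth operation on a node $u$ toward an adjacent grid point $p$ either (i) if $u$ has no edge to $p$, creates a new node $u'$ at $p$ with edge $uu'$; or (ii) if $p$ is occupied by a node $v$ with $uv\in E$, creates a new node $u'$ at $p$, replaces edge $uv$ by edges $uu',u'v$, and translates by one unit, along the axis of $uv$, the part of a spanning tree rooted at $u_0$ hanging from whichever of $u,v$ is farther from $u_0$, away from the other endpoint. With neighbor handover, in addition any neighbor $w$ of $u$ lying in a direction perpendicular to $uu'$ may be handed over to $u'$ (become joined to $u'$ instead of $u$) by a unit translation parallel to $uu'$ of the subtree of whichever of $u,w$ is farther from $u_0$. In one time step a set of operations is applied concurrently, each node receiving at most one operation and all operations having the same cardinal direction; the displacement of each node is the sum of the unit vectors contributed by the operations on its path to $u_0$ in a spanning tree rooted at $u_0$. The set is collision-free if no two nodes collide during these motions or end at the same point, and for every cycle and every two of its nodes the displacements accumulated along the two paths of the cycle between them are equal. Growth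 processes. A cycle-breaking growth process in the adjacency graph model starts from $S_1^b=S_0$; in each time step $t$ it first deletes a (possibly empty) subset of edges of $S_t^b$ whose removal keeps the shape connected, then applies a collision-free set of growth operations, obtaining $S_t^e$, and sets $S_{t+1}^b=AC(S_t^e)$. It grows $S$ in $t_f$ steps if the shape after step $t_f$ is $S$. *)

(* Defs.v *)
From mathcomp Require Import all_boot all_order all_algebra.
From Stdlib Require Import Relations.
Set Implicit Arguments. Unset Strict Implicit. Unset Printing Implicit Defensive.
Import Order.TTheory GRing.Theory Num.Theory.
Local Open Scope ring_scope.

Definition point := (int * int)%type.
Definition padd (a b : point) : point := (a.1 + b.1, a.2 + b.2).
Definition psub (a b : point) : point := (a.1 - b.1, a.2 - b.2).
Definition adjacent (a b : point) : Prop := `|a.1 - b.1| + `|a.2 - b.2| = 1.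
Definition dirs : seq point := [:: (1, 0); (-1, 0); (0, 1); (0, -1)].
Definition perpendicular (v d : point) : Prop := v.1 * d.1 + v.2 * d.2 = 0.

(* A shape: nodes are identified with the (distinct) grid points they
   occupy; edges form a relation on points. *)
Record gshape := Shape { sV : seq point; sE : point -> point -> Prop }.

Definition shape_connected (S : gshape) : Prop :=
  forall a b, a \in sV S -> b \in sV S -> clos_refl_trans point (sE S) a b.

Definition wf_shape (S : gshape) : Prop :=
  [/\ sV S != [::],
      (forall a b, sE S a b -> [/\ a \in sV S, b \in sV S & adjacent a b]),
      (forall a b, sE S a b -> sE S b a) & shape_connected S].

Definition AC (S : gshape) : gshape :=
  Shape (sV S) (fun a b => sE S a b \/ [/\ a \in sV S, b \in sV S & adjacent a b]).

Definition adj_shape (P : seq point) : gshape :=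
  Shape P (fun a b => [/\ a \in P, b \in P & adjacent a b]).

Definition shape_equiv (S T : gshape) : Prop :=
  exists t : point,
    (forall x, (x \in sV S) = (padd x t \in sV T)) /\
    (forall a b, sE S a b <-> sE T (padd a t) (padd b t)).

Definition edge_deletion (S G : gshape) : Prop :=
  [/\ sV G = sV S, (forall a b, sE G a b -> sE S a b),
      (forall a b, sE G a b -> sE G b a) & shape_connected G].

(* nodes after a growth step: old nodes (named by their initial point) and
   the new node u' created by the operation on node u (named New u) *)
Inductive gnode := Old of point | New of point.

Section Step.
Variables (G : gshape) (d : point) (O : seq point) (H : point -> point -> Prop).
(* O = nodes receiving a growth operation (toward u + d);
   H u w = neighbor w of u is handed over to u'. *)

Definition is_node (x : gnode) : Prop :=
  match x with Old a => a \in sV G | New u => u \in O end.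

Definition start_pos (x : gnode) : point :=
  match x with Old a => a | New u => u end.

(* the operation on u is of type (ii) on the edge u(u+d) *)
Definition split_edge (a b : point) : Prop := a \in O /\ b = padd a d /\ sE G a b.

Definition valid_ops : Prop :=
  [/\ uniq O, (forall u, u \in O -> u \in sV G),
      (forall u w, H u w -> [/\ u \in O, sE G u w & perpendicular (psub w u) d]) &
      (forall u w, H u w -> ~ H w u)].

Definition FE (x y : gnode) (v : point) : Prop :=
  (exists a b, [/\ x = Old a, y = Old b, sE G a b,
     ~ split_edge a b /\ ~ split_edge b a /\ ~ H a b /\ ~ H b a & v = psub b a])
  \/ (exists u, [/\ u \in O, x = Old u, y = New u & v = d])
  \/ (exists u, [/\ split_edge u (padd u d), x = New u, y = Old (padd u d) & v = d])
  \/ (exists u w, [/\ H u w, x = New u, y = Old w & v = psub w u]).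

Definition NE (x y : gnode) : Prop := exists v, FE x y v \/ FE y x v.

(* linear motion from relative position r0 to r1 never hits 0 for t in (0,1] *)
Definition no_collision (r0 r1 : point) : Prop :=
  ~ exists t : rat, [/\ 0 < t, t <= 1,
      r0.1%:~R + t * (r1.1 - r0.1)%:~R = 0 & r0.2%:~R + t * (r1.2 - r0.2)%:~R = 0].

(* F = final positions; the anchor is stationary, edge vectors are respected
   (equivalently: displacements agree along every cycle), collision-free *)
Definition motion_ok (F : gnode -> point) : Prop :=
  [/\ (exists u0, u0 \in sV G /\ F (Old u0) = u0),
      (forall x y v, FE x y v -> psub (F y) (F x) = v) &
      (forall x y, is_node x -> is_node y -> x <> y ->
         no_collision (psub (start_pos x) (start_pos y)) (psub (F x) (F y)))].

Definition grown (F : gnode -> point) : gshape :=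
  Shape ([seq F (Old a) | a <- sV G] ++ [seq F (New u) | u <- O])
        (fun a b => exists x y, [/\ NE x y, F x = a & F y = b]).
End Step.

(* one time step of a cycle-breaking growth process (adjacency graph model,
   neighbor handover allowed): S = S_t^b, T = S_{t+1}^b *)
Definition growth_step (S T : gshape) : Prop :=
  exists (G : gshape) (d : point) (O : seq point) (H : point -> point -> Prop)
         (F : gnode -> point),
    [/\ edge_deletion S G, d \in dirs, valid_ops G d O H, motion_ok G d O H F
      & T = AC (grown G d O H F)].

Inductive reach : nat -> gshape -> gshape -> Prop :=
| reach0 S : reach 0 S S
| reachS n S T U : growth_step S T -> reach n T U -> reach n.+1 S U.

Definition single_node : gshape := Shape [:: (0, 0)] (fun _ _ => False).

Definition nrows (P : seq point) : nat := size (undup [seq p.2 | p <- P]).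
Definition ncols (P : seq point) : nat := size (undup [seq p.1 | p <- P]).

(* Main.v *)
Require Import Defs.
From mathcomp Require Import all_boot all_order all_algebra.
From mathcomp Require Import zify ring lra.
From Stdlib Require Import Relations.
Set Implicit Arguments. Unset Strict Implicit. Unset Printing Implicit Defensive.
Import Order.TTheory GRing.Theory Num.Theory.
Local Open Scope ring_scope.

Lemma pairE (a b c e : int) : ((a, b) = (c, e)) <-> (a = c /\ b = e).
Proof. by split; [case=> -> -> | case=> -> ->]. Qed.

Definition e (d q : point) : point := (q.1 + q.1 * d.1, q.2 + q.2 * d.2).
Definition g (d p : point) : point :=
  if d == (1, 0) then ((p.1 %/ 2)%Z, p.2) else (p.1, (p.2 %/ 2)%Z).
Definition E (d : point) (P : seq point) (x : point) : point :=
  if e d x \in P then e d x else padd (e d x) d.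

Ltac pt :=
  unfold e, g, padd, psub, adjacent, perpendicular in *;
  repeat match goal with p : point |- _ => let a := fresh "a" in
     let b := fresh "b" in destruct p as [a b] end;
  simpl in *;
  repeat match goal with H : context [(_, _) = (_, _)] |- _ =>
     rewrite pairE in H end;
  rewrite ?pairE.

Definition dok (d : point) := d = (1, 0) \/ d = (0, 1).

Lemma gP d p : dok d -> p = e d (g d p) \/ p = padd (e d (g d p)) d.
Proof. case=> ->; pt; lia. Qed.

Lemma ge d q : dok d -> g d (e d q) = q.
Proof. case=> ->; pt; lia. Qed.

Lemma ged d q : dok d -> g d (padd (e d q) d) = q.
Proof. case=> ->; pt; lia. Qed.

Lemma gadj d p1 p2 : dok d -> adjacent p1 p2 ->
  g d p1 = g d p2 \/ adjacent (g d p1) (g d p2).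
Proof. case=> ->; pt; lia. Qed.

Lemma E_cases d (P : seq point) x : E d P x = e d x /\ e d x \in P \/
                      E d P x = padd (e d x) d /\ e d x \notin P.
Proof. rewrite /E; case: ifP=> h; [left|right]; split=> //; by rewrite h. Qed.

Lemma gpre d (P : seq point) p x : dok d -> g d p = x -> p \in P ->
  (p = e d x /\ e d x \in P) \/ (p = padd (e d x) d /\ padd (e d x) d \in P).
Proof. move=> hd <- hp; case: (gP p hd)=> h; [left|right]; by rewrite -h. Qed.

Lemma FE_old d (P : seq point) (a b xa xb p1 p2 : point) :
  dok d -> adjacent a b -> psub xb xa = psub b a ->
  p1 \in P -> p2 \in P -> adjacent p1 p2 -> g d p1 = xa -> g d p2 = xb ->
  ((e d xa \in P) && (padd (e d xa) d \in P) -> b <> padd a d) ->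
  ((e d xb \in P) && (padd (e d xb) d \in P) -> a <> padd b d) ->
  ((e d xa \in P) && (padd (e d xa) d \in P) -> perpendicular (psub b a) d ->
     E d P xb = padd (E d P xa) (psub b a)) ->
  ((e d xb \in P) && (padd (e d xb) d \in P) -> perpendicular (psub a b) d ->
     E d P xa = padd (E d P xb) (psub a b)) ->
  psub (E d P xb) (E d P xa) = psub b a.
Proof.
move=> hd hab hx h1 h2 h12 g1 g2 oa ob ha hb.
case: (gpre hd g1 h1) => -[e1 m1]; case: (gpre hd g2 h2) => -[e2 m2];
subst p1 p2;
rewrite m1 m2 /= ?andbT in oa ob ha hb;
case: (E_cases d P xa) => -[Ea ma]; case: (E_cases d P xb) => -[Eb mb];
rewrite Ea Eb in ha hb *;
rewrite ?ma ?mb /= in oa ob ha hb; try by rewrite ma in m1; try by rewrite mb in m2.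
all: try (case: hd => hd; subst d; pt; lia).
Qed.

Lemma FE_split d (P : seq point) (u b xu xb p1 p2 : point) :
  dok d -> b = padd u d -> psub xb xu = psub b u ->
  p1 \in P -> p2 \in P -> adjacent p1 p2 -> g d p1 = xu -> g d p2 = xb ->
  e d xu \in P -> padd (e d xu) d \in P ->
  psub (E d P xb) (padd (E d P xu) d) = d.
Proof.
move=> hd hb hx h1 h2 h12 g1 g2 m0 m1'.
case: (gpre hd g1 h1) => -[e1 n1]; case: (gpre hd g2 h2) => -[e2 n2];
subst p1 p2;
case: (E_cases d P xu) => -[Ea ma]; case: (E_cases d P xb) => -[Eb mb];
rewrite Ea Eb; try by rewrite ?ma ?mb in m0 n2.
all: try (case: hd => hd; subst d; pt; lia).
Qed.

Lemma FE_hand d (P : seq point) (u w xu xw p1 p2 : point) :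
  dok d -> adjacent u w -> perpendicular (psub w u) d -> psub xw xu = psub w u ->
  p1 \in P -> p2 \in P -> adjacent p1 p2 -> g d p1 = xu -> g d p2 = xw ->
  e d xu \in P -> padd (e d xu) d \in P ->
  E d P xw <> padd (E d P xu) (psub w u) ->
  psub (E d P xw) (padd (E d P xu) d) = psub w u.
Proof.
move=> hd huw hp hx h1 h2 h12 g1 g2 m0 m1' hne.
case: (gpre hd g1 h1) => -[e1 n1]; case: (gpre hd g2 h2) => -[e2 n2];
subst p1 p2;
case: (E_cases d P xu) => -[Ea ma]; case: (E_cases d P xw) => -[Eb mb];
rewrite Ea Eb in hne *; try by rewrite ?ma ?mb in m0 n2.
all: try (case: hd => hd; subst d; pt; lia).
Qed.

Lemma valid4 d (P : seq point) (u w xu xw : point) :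
  dok d -> perpendicular (psub w u) d -> psub xw xu = psub w u ->
  e d xu \in P -> e d xw \in P ->
  E d P xw = padd (E d P xu) (psub w u).
Proof.
move=> hd hp hx m0 m1; rewrite /E m0 m1.
case: hd => hd; subst d; pt; lia.
Qed.

Definition crit (r0 r1 : point) :=
  (0 < r0.1 /\ 0 < r1.1) \/ (r0.1 < 0 /\ r1.1 < 0) \/ (r0.1 = 0 /\ r1.1 != 0) \/
  (0 < r0.2 /\ 0 < r1.2) \/ (r0.2 < 0 /\ r1.2 < 0) \/ (r0.2 = 0 /\ r1.2 != 0).

Definition fpos d t x (k : int) : point :=
  psub (padd (e d x) (k * d.1, k * d.2)) t.

Lemma coll d (s1 s2 t t' : point) (k1 k2 : int) : dok d ->
  (k1 = 0 \/ k1 = 1) -> (k2 = 0 \/ k2 = 1) -> (s1 = s2 -> k1 <> k2) ->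
  crit (psub s1 s2) (psub (fpos d t' (padd s1 t) k1) (fpos d t' (padd s2 t) k2)).
Proof.
rewrite /crit /fpos => hd hk1 hk2 hs.
case: hd => hd; subst d; pt; lia.
Qed.
Lemma lin_nz (a b : int) (t : rat) : 0 < t -> t <= 1 ->
  (0 < a /\ 0 < b) \/ (a < 0 /\ b < 0) \/ (a = 0 /\ b != 0) ->
  a%:~R + t * (b - a)%:~R != 0 :> rat.
Proof.
move=> t0 t1 h.
have E : a%:~R + t * (b - a)%:~R = (1 - t) * a%:~R + t * b%:~R :> rat.
  by rewrite intrB; ring.
rewrite E; case: h => [[ha hb]|[[ha hb]|[ha hb]]].
- have ha' : (0 : rat) < a%:~R by rewrite ltr0z.
  have hb' : (0 : rat) < b%:~R by rewrite ltr0z.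
  apply/negP=> /eqP h; nra.
- have ha' : (a%:~R : rat) < 0 by rewrite ltrz0.
  have hb' : (b%:~R : rat) < 0 by rewrite ltrz0.
  apply/negP=> /eqP h; nra.
- rewrite ha mulr0 add0r mulf_eq0 negb_or intr_eq0 hb andbT.
  by rewrite gt_eqF.
Qed.

Lemma crit_nc r0 r1 : crit r0 r1 -> no_collision r0 r1.
Proof.
move=> h [t [t0 t1 h1 h2]].
case: h => [h|[h|[h|h]]].
- by move: (lin_nz t0 t1 (or_introl h)); rewrite h1 eqxx.
- by move: (lin_nz t0 t1 (or_intror (or_introl h))); rewrite h1 eqxx.
- by move: (lin_nz t0 t1 (or_intror (or_intror h))); rewrite h1 eqxx.
have h' : (0 < r0.2 /\ 0 < r1.2) \/ (r0.2 < 0 /\ r1.2 < 0) \/ (r0.2 = 0 /\ r1.2 != 0) by tauto.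
by move: (lin_nz t0 t1 h'); rewrite h2 eqxx.
Qed.


Definition adjS (S : gshape) := forall a b,
  sE S a b <-> [/\ a \in sV S, b \in sV S & adjacent a b].
Definition vtrans (S : gshape) (P : seq point) (t : point) :=
  forall x, (x \in sV S) = (padd x t \in P).

Lemma adjacent_tr a b t : adjacent (padd a t) (padd b t) <-> adjacent a b.
Proof.
case: a b t => [a1 a2] [b1 b2] [t1 t2]; rewrite /adjacent /padd /=.
split; lia.
Qed.

Lemma equiv_of S P t : adjS S -> vtrans S P t -> shape_equiv S (adj_shape P).
Proof.
move=> hA hV; exists t; split=> // a b; rewrite hA /= (hV a) (hV b).
have := adjacent_tr a b t => h; split=> -[h1 h2 h3]; split=> //; tauto.
Qed.


Lemma adjacent_sym a b : adjacent a b -> adjacent b a.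
Proof. pt; lia. Qed.
Lemma trsub a b t : psub (padd b t) (padd a t) = psub b a.
Proof. pt; lia. Qed.
Lemma psubK A B t : psub (psub A t) (psub B t) = psub A B.
Proof. pt; lia. Qed.
Lemma anchorK A u : psub A (psub A u) = u.
Proof. pt; lia. Qed.
Lemma paddK x t : padd (psub x t) t = x.
Proof. pt; lia. Qed.
Lemma psubK2 x t : psub (padd x t) t = x.
Proof. pt; lia. Qed.
Lemma adj_of_sub x y a b : psub y x = psub b a -> adjacent a b -> adjacent x y.
Proof. pt; lia. Qed.
Lemma adj_of_d d x y : dok d -> psub y x = d -> adjacent x y.
Proof. case=> ->; pt; lia. Qed.
Lemma padd_sub A B : psub (padd A B) A = B.
Proof. pt; lia. Qed.

Lemma conn_image (P : seq point) (f : point -> point) (R : point -> point -> Prop) :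
  shape_connected (adj_shape P) ->
  (forall p1 p2, p1 \in P -> p2 \in P -> adjacent p1 p2 ->
     f p1 = f p2 \/ R (f p1) (f p2)) ->
  forall p1 p2, p1 \in P -> p2 \in P -> clos_refl_trans point R (f p1) (f p2).
Proof.
move=> hc hR p1 p2 h1 h2; elim: (hc p1 p2 h1 h2) =>
  [x y [hx hy hxy]|x|x y z _ IH1 _ IH2].
- by case: (hR x y hx hy hxy) => [->|h]; [apply: rt_refl|apply: rt_step].
- exact: rt_refl.
- exact: rt_trans IH1 IH2.
Qed.

Definition good d (P : seq point) t a b := exists p1 p2,
  [/\ p1 \in P, p2 \in P, adjacent p1 p2, g d p1 = padd a t & g d p2 = padd b t].
Definition Gs d P (S : gshape) t := Shape (sV S)
  (fun a b => [/\ a \in sV S, b \in sV S, adjacent a b & good d P t a b]).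
Definition inO d (P : seq point) t a :=
  (e d (padd a t) \in P) && (padd (e d (padd a t)) d \in P).
Definition Os d P (S : gshape) t := [seq a <- undup (sV S) | inO d P t a].
Definition Hs d P S t u w :=
  [/\ u \in Os d P S t, sE (Gs d P S t) u w, perpendicular (psub w u) d &
      E d P (padd w t) <> padd (E d P (padd u t)) (psub w u)].
Definition tp d P (S : gshape) t :=
  psub (E d P (padd (head (0, 0) (sV S)) t)) (head (0, 0) (sV S)).
Definition Fs d P S t (x : gnode) : point :=
  match x with
  | Old a => psub (E d P (padd a t)) (tp d P S t)
  | New u => psub (padd (E d P (padd u t)) d) (tp d P S t)
  end.

Lemma fpos0 d t x : psub (e d x) t = fpos d t x 0.
Proof. rewrite /fpos; pt; lia. Qed.
Lemma fpos1 d t x : psub (padd (e d x) d) t = fpos d t x 1.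
Proof. rewrite /fpos; pt; lia. Qed.

Lemma perp_sym u v d : perpendicular (psub u v) d -> perpendicular (psub v u) d.
Proof.
rewrite /perpendicular /psub /= => h.
have -> : (v.1 - u.1) * d.1 + (v.2 - u.2) * d.2 =
   - ((u.1 - v.1) * d.1 + (u.2 - v.2) * d.2) by ring.
by rewrite h oppr0.
Qed.

Definition Ts d P S t := Defs.AC (grown (Gs d P S t) d (Os d P S t) (Hs d P S t) (Fs d P S t)).

Section StepSec.
Variables (d : point) (P : seq point) (S : gshape) (t : point).
Hypotheses (hd : dok d) (hS : adjS S) (hV : vtrans S (map (g d) P) t)
  (hne : sV S != [::]) (hc : shape_connected (adj_shape P)).

Local Notation G := (Gs d P S t).
Local Notation O := (Os d P S t).
Local Notation H := (Hs d P S t).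
Local Notation F := (Fs d P S t).

Lemma memO a : (a \in O) = inO d P t a && (a \in sV S).
Proof. by rewrite mem_filter mem_undup. Qed.

Lemma inS a : (a \in sV S) = (padd a t \in map (g d) P).
Proof. exact: hV. Qed.

Lemma inS_ex a : a \in sV S -> exists2 p, p \in P & g d p = padd a t.
Proof. by rewrite inS => /mapP [p hp ->]; exists p. Qed.

Lemma G_conn : shape_connected G.
Proof.
move=> a b /= ha hb.
case: (inS_ex ha) => p1 h1 e1; case: (inS_ex hb) => p2 h2 e2.
have -> : a = psub (g d p1) t by rewrite e1 psubK2.
have -> : b = psub (g d p2) t by rewrite e2 psubK2.
apply: (conn_image (P := P) (f := fun p => psub (g d p) t) hc _ h1 h2) => x y hx hy hxy.
case: (gadj hd hxy) => [->|hadj]; [by left|right].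
have mx : psub (g d x) t \in sV S by rewrite inS paddK; apply: map_f.
have my : psub (g d y) t \in sV S by rewrite inS paddK; apply: map_f.
split=> //; first by apply: (adj_of_sub (a := g d x) (b := g d y)); rewrite ?psubK.
by exists x, y; rewrite !paddK.
Qed.

Lemma edel : edge_deletion S G.
Proof.
split=> //.
- by move=> a b [ha hb hab _]; apply/hS.
- move=> a b [ha hb hab [p1 [p2 [h1 h2 h12 e1 e2]]]]; split=> //.
    exact: adjacent_sym.
  by exists p2, p1; split=> //; apply: adjacent_sym.
- exact: G_conn.
Qed.

Lemma vops : valid_ops G d O H.
Proof.
split.
- by rewrite /Os filter_uniq // undup_uniq.
- by move=> u; rewrite memO => /andP[].
- by move=> u w [? ? ? ?].
- move=> u w [hu [_ _ huw _] hp hn] [hw _ _ _]; apply: hn.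
  rewrite memO /inO in hu; rewrite memO /inO in hw; move/andP: hu => [/andP[m1 _] _].
  move/andP: hw => [/andP[m2 _] _].
  exact: (valid4 hd hp (trsub _ _ _) m1 m2).
Qed.

Definition kOld a : int := if e d (padd a t) \in P then 0 else 1.

Lemma FOld a : F (Old a) = fpos d (tp d P S t) (padd a t) (kOld a).
Proof. by rewrite /= /E /kOld; case: ifP => _; [apply: fpos0|apply: fpos1]. Qed.

Lemma FNew u : inO d P t u -> F (New u) = fpos d (tp d P S t) (padd u t) 1.
Proof. rewrite /inO /= /E => /andP[-> _]; apply: fpos1. Qed.

Lemma kOld01 a : kOld a = 0 \/ kOld a = 1.
Proof. by rewrite /kOld; case: ifP; [left|right]. Qed.

Lemma nodeS x : is_node G O x -> start_pos x \in sV S.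
Proof. by case: x => [a|u] //= /[dup] h; rewrite memO => /andP[]. Qed.

Lemma mok : motion_ok G d O H F.
Proof.
split.
- exists (head (0, 0) (sV S)); split; last by rewrite /= /tp anchorK.
  by case E0: (sV S) hne => [|x0 l] //= _; rewrite E0 mem_head.
- move=> x y v [[a [b [-> -> hab [ns1 [ns2 [nh1 nh2]]] ->]]] |
    [[u [hu -> -> ->]] | [[u [hs -> -> ->]] | [u [w [hH -> -> ->]]]]]].
  + rewrite /= psubK.
    have hab' := hab; case: hab' => [ha hb hadj [p1 [p2 [h1 h2 h12 g1 g2]]]].
    apply: (FE_old hd hadj (trsub _ _ _) h1 h2 h12 g1 g2).
    * move=> ho heq; apply: ns1; split; first by rewrite memO /inO ho.
      by split.
    * move=> ho heq; apply: ns2; split; first by rewrite memO /inO ho.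
      by split=> //; case: hab => ? ? ? [q1 [q2 [? ? ? ? ?]]];
         split=> //; [exact: adjacent_sym | exists q2, q1; split=> //; exact: adjacent_sym].
    * move=> ho hp; apply/eqP; apply: contraT => hn; exfalso; apply: nh1; split=> //.
      - by rewrite memO /inO ho.
      - exact/eqP.
    * move=> ho hp; apply/eqP; apply: contraT => hn; exfalso; apply: nh2; split=> //.
      - by rewrite memO /inO ho.
      - by case: hab => ? ? ? [q1 [q2 [? ? ? ? ?]]];
         split=> //; [exact: adjacent_sym | exists q2, q1; split=> //; exact: adjacent_sym].
      - exact/eqP.
  + by rewrite /= psubK padd_sub.
  + rewrite /= psubK.
    case: hs => hu [_ [ha hb hadj [p1 [p2 [h1 h2 h12 g1 g2]]]]].
    rewrite memO /inO in hu; move/andP: hu => [/andP[m1 m2] _].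
    exact: (FE_split hd erefl (trsub _ _ _) h1 h2 h12 g1 g2 m1 m2).
  + rewrite /= psubK.
    case: hH => hu [ha hb hadj [p1 [p2 [h1 h2 h12 g1 g2]]]] hp hn.
    rewrite memO /inO in hu; move/andP: hu => [/andP[m1 m2] _].
    exact: (FE_hand hd hadj hp (trsub _ _ _) h1 h2 h12 g1 g2 m1 m2 hn).
- move=> x y hx hy hxy; apply: crit_nc.
  case: x hx hxy => [a|u] hx; case: y hy => [b|w] hy hxy.
  + rewrite !FOld; apply: coll => //; try exact: kOld01.
    by move=> /= eab; case: hxy; rewrite eab.
  + have ho : inO d P t w by move: hy; rewrite /= memO => /andP[].
    rewrite FOld FNew //; apply: coll => //; [exact: kOld01|by right|].
    move=> /= eab; subst; rewrite /kOld; move: ho; rewrite /inO => /andP[-> _] //.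
  + have ho : inO d P t u by move: hx; rewrite /= memO => /andP[].
    rewrite FOld FNew //; apply: coll => //; [by right|exact: kOld01|].
    move=> /= eab; subst; rewrite /kOld; move: ho; rewrite /inO => /andP[-> _] //.
  + have ho : inO d P t u by move: hx; rewrite /= memO => /andP[].
    have ho' : inO d P t w by move: hy; rewrite /= memO => /andP[].
    rewrite !FNew //; apply: coll => //; try by right.
    by move=> /= eab; case: hxy; rewrite eab.
Qed.

Local Notation T := (Ts d P S t).

Lemma E_inP x : x \in map (g d) P -> E d P x \in P.
Proof.
case/mapP => p hp ->; rewrite /E; case: ifP => // hn.
by case: (gpre hd (erefl (g d p)) hp) => -[e1 m] //; rewrite m in hn.
Qed.

Lemma vT : vtrans T P (tp d P S t).
Proof.
move=> x; rewrite /= mem_cat; apply/idP/idP.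
- case/orP => /mapP [a ha ->].
  + by rewrite /= paddK; apply: E_inP; rewrite -inS.
  + rewrite /= paddK; have : inO d P t a by move: ha; rewrite memO => /andP[].
    by rewrite /inO /E => /andP[m1 m2]; rewrite m1.
- move=> hp; have hx : x = psub (padd x (tp d P S t)) (tp d P S t) by rewrite psubK2.
  move: hp hx; set p := padd x (tp d P S t) => hp hx.
  have ha : psub (g d p) t \in sV S by rewrite inS paddK map_f.
  case: (gpre hd (erefl (g d p)) hp) => -[ep m].
  + apply/orP; left; apply/mapP; exists (psub (g d p) t) => //.
    by rewrite /= paddK /E m -ep.
  + case m0: (e d (g d p) \in P).
    * apply/orP; right; apply/mapP; exists (psub (g d p) t).
        by rewrite memO ha andbT /inO paddK m0 m.
      by rewrite /= paddK /E m0 -ep.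
    * apply/orP; left; apply/mapP; exists (psub (g d p) t) => //.
      by rewrite /= paddK /E m0 -ep.
Qed.

Lemma FE_nodes x y v : FE G d O H x y v -> is_node G O x /\ is_node G O y.
Proof.
move=> [[a [b [-> -> [ha hb _ _] _ _]]] |
    [[u [hu -> -> _]] | [[u [[hu [_ [ha hb _ _]]] -> -> _]] | [u [w [hH -> -> _]]]]]] //=.
- by split=> //; move: hu; rewrite memO => /andP[].
- by case: hH => hu [ha hb _ _] _ _.
Qed.

Lemma FE_adj x y v : FE G d O H x y v -> adjacent (F x) (F y).
Proof.
move=> h; case: mok => _ hm _; have := hm _ _ _ h.
case: h => [[a [b [-> -> [_ _ hab _] _ ->]]] |
    [[u [hu -> -> ->]] | [[u [_ -> -> ->]] | [u [w [hH -> -> ->]]]]]] he.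
- exact: adj_of_sub he hab.
- exact: adj_of_d hd he.
- exact: adj_of_d hd he.
- by case: hH => _ [_ _ huw _] _ _; apply: adj_of_sub he huw.
Qed.

Lemma node_in x : is_node G O x -> F x \in sV T.
Proof.
by case: x => [a|u] h; rewrite /Ts /= mem_cat; apply/orP; [left|right];
  apply/mapP; [exists a|exists u].
Qed.

Lemma aT : adjS T.
Proof.
move=> a b; split; last by right.
case=> [[x [y [[v [h|h]] <- <-]]]|//].
- case: (FE_nodes h) => nx ny; split; [exact: node_in|exact: node_in|exact: FE_adj h].
- case: (FE_nodes h) => ny nx; split; [exact: node_in|exact: node_in|].
  exact: adjacent_sym (FE_adj h).
Qed.

Lemma gstep : growth_step S T.
Proof.
exists G, d, O, H, F; split.
- exact: edel.
- by case: hd => ->.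
- exact: vops.
- exact: mok.
- by [].
Qed.
End StepSec.

Lemma reach_snoc n S T U : reach n S T -> growth_step T U -> reach n.+1 S U.
Proof.
elim=> [S0 h|m S0 T0 U0 h1 h2 IH h3]; first by apply: reachS h (reach0 _).
by apply: reachS h1 (IH h3).
Qed.

Lemma step_up d (P : seq point) T0 t0 : dok d -> adjS T0 ->
  vtrans T0 (map (g d) P) t0 -> P != [::] -> shape_connected (adj_shape P) ->
  exists T t, [/\ growth_step T0 T, adjS T & vtrans T P t].
Proof.
move=> hd hA hV hP hc.
have hne : sV T0 != [::].
  have [p hp] : exists p, p \in P by case: (P) hP => // p ? _; exists p; rewrite mem_head.
  have : psub (g d p) t0 \in sV T0 by rewrite hV paddK map_f.
  by case: (sV T0).
exists (Ts d P T0 t0), (tp d P T0 t0); split.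
- exact: gstep.
- exact: aT.
- exact: vT.
Qed.

Definition trP (P : seq point) m := map (fun p => psub p m) P.

Lemma mem_trP P m x : (x \in trP P m) = (padd x m \in P).
Proof.
apply/mapP/idP => [[p hp ->]|h]; first by rewrite paddK.
by exists (padd x m); rewrite ?psubK2.
Qed.

Lemma conn_map (P : seq point) (f : point -> point) :
  shape_connected (adj_shape P) ->
  (forall p1 p2, adjacent p1 p2 -> f p1 = f p2 \/ adjacent (f p1) (f p2)) ->
  shape_connected (adj_shape (map f P)).
Proof.
move=> hc hf a b /mapP [p1 h1 ->] /mapP [p2 h2 ->].
apply: (conn_image hc _ h1 h2) => x y hx hy hxy.
case: (hf x y hxy) => [->|h]; [by left|right].
by split=> //; apply: map_f.
Qed.

Lemma conn_trP P m : shape_connected (adj_shape P) -> shape_connected (adj_shape (trP P m)).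
Proof.
move=> hc; apply: conn_map => // p1 p2 h; right.
by apply: (adj_of_sub (a := p1) (b := p2)); rewrite ?psubK.
Qed.

Lemma paddA x t m : padd (padd x t) m = padd x (padd t m).
Proof. pt; lia. Qed.

Lemma vtrans_tr T P m t : vtrans T (trP P m) t -> vtrans T P (padd t m).
Proof. by move=> h x; rewrite h mem_trP paddA. Qed.

Lemma exists_min (P : seq point) (f : point -> int) : P != [::] ->
  exists2 p0, p0 \in P & forall p, p \in P -> f p0 <= f p.
Proof.
elim: P => // p P IH _; case: (altP (P =P [::])) => [->|hP].
  by exists p; rewrite ?inE ?eqxx // => q; rewrite inE => /eqP ->.
case: (IH hP) => p0 h0 hm.
case: (leP (f p) (f p0)) => hle.
- exists p; first by rewrite inE eqxx.
  move=> q; rewrite inE => /orP [/eqP -> //|/hm]; exact: le_trans.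
- exists p0; first by rewrite inE h0 orbT.
  by move=> q; rewrite inE => /orP [/eqP ->|/hm //]; apply: ltW.
Qed.

Definition span1 (P : seq point) (k : nat) :=
  forall p q, p \in P -> q \in P -> p.1 - q.1 < k%:Z.
Definition span2 (P : seq point) (k : nat) :=
  forall p q, p \in P -> q \in P -> p.2 - q.2 < k%:Z.

Lemma single_adj : adjS single_node.
Proof.
move=> a b; split=> //= -[]; rewrite !inE => /eqP -> /eqP ->.
rewrite /adjacent /=; lia.
Qed.

Lemma grow_all n : forall a b (P : seq point), (a + b = n)%N -> P != [::] ->
  shape_connected (adj_shape P) -> span1 P (2 ^ a) -> span2 P (2 ^ b) ->
  exists T t, [/\ reach (a + b) single_node T, adjS T & vtrans T P t].
Proof.
elim: n => [|n IH] a b P hn hP hc s1 s2.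
- move: hn => /eqP; rewrite addn_eq0 => /andP [/eqP ha /eqP hb]; subst a b.
  case: P hP hc s1 s2 => // p0 P' _ hc s1 s2.
  have hall : forall p, p \in p0 :: P' -> p = p0.
    move=> [x y] hp; have := s1 _ _ hp (mem_head p0 P'); have := s2 _ _ hp (mem_head p0 P').
    have := s1 _ _ (mem_head p0 P') hp; have := s2 _ _ (mem_head p0 P') hp.
    case: p0 {hp hc s1 s2} => x0 y0 /=; rewrite expn0 => h1 h2 h3 h4.
    by apply/pairE; lia.
  exists single_node, p0; split; [exact: reach0|exact: single_adj|].
  move=> x; rewrite /= inE; apply/idP/idP => [/eqP ->|h].
  + by rewrite /padd /= !add0r -surjective_pairing mem_head.
  + have := hall _ h; case: x {h} => x1 x2; case: p0 {hall s1 s2 hc} => y1 y2.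
    rewrite /padd /= => /pairE [h1 h2]; apply/eqP/pairE; lia.
- case: a hn s1 => [|a] hn s1.
  + (* halve in y *)
    case: b hn s2 => [//|b] [hn] s2.
    case: (exists_min (fun p : point => p.2) hP) => p0 h0 hm.
    set P' := trP P (0, p0.2).
    set Q := map (g (0, 1)) P'.
    have hd : dok (0, 1) by right.
    have hP' : P' != [::] by rewrite /P' /trP; case: (P) hP.
    have hc' : shape_connected (adj_shape P') by apply: conn_trP.
    have hQ : Q != [::] by rewrite /Q; case: (P') hP'.
    have hcQ : shape_connected (adj_shape Q)
      by apply: conn_map => // p1 p2 h; apply: gadj.
    have s1Q : span1 Q (2 ^ 0).
      move=> x y /mapP [p hp ->] /mapP [q hq ->].
      rewrite mem_trP in hp; rewrite mem_trP in hq.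
      have := s1 _ _ hp hq; move: p q {hp hq} => [p1 p2] [q1 q2].
      rewrite /g /padd /=; lia.
    have s2Q : span2 Q (2 ^ b).
      move=> x y /mapP [p hp ->] /mapP [q hq ->].
      rewrite mem_trP in hp; rewrite mem_trP in hq.
      have := s2 _ _ hp h0; have := hm _ hq.
      move: p q {hp hq} => [p1 p2] [q1 q2].
      rewrite /g /padd /= expnS.
      move: (2 ^ b)%N => k; lia.
    case: (IH 0%N b Q hn hQ hcQ s1Q s2Q) => T0 [t0 [hr hA hV]].
    case: (step_up hd hA hV hP' hc') => T [t [hs hA' hV']].
    exists T, (padd t (0, p0.2)); split=> //; last exact: vtrans_tr.
    by rewrite add0n; apply: reach_snoc hr hs.
  + (* halve in x *)
    case: (exists_min (fun p : point => p.1) hP) => p0 h0 hm.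
    set P' := trP P (p0.1, 0).
    set Q := map (g (1, 0)) P'.
    have hd : dok (1, 0) by left.
    have hP' : P' != [::] by rewrite /P' /trP; case: (P) hP.
    have hc' : shape_connected (adj_shape P') by apply: conn_trP.
    have hQ : Q != [::] by rewrite /Q; case: (P') hP'.
    have hcQ : shape_connected (adj_shape Q)
      by apply: conn_map => // p1 p2 h; apply: gadj.
    have s1Q : span1 Q (2 ^ a).
      move=> x y /mapP [p hp ->] /mapP [q hq ->].
      rewrite mem_trP in hp; rewrite mem_trP in hq.
      have := s1 _ _ hp h0; have := hm _ hq.
      move: p q {hp hq} => [p1 p2] [q1 q2].
      rewrite /g /padd /= expnS.
      move: (2 ^ a)%N => k; lia.
    have s2Q : span2 Q (2 ^ b).
      move=> x y /mapP [p hp ->] /mapP [q hq ->].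
      rewrite mem_trP in hp; rewrite mem_trP in hq.
      have := s2 _ _ hp hq; move: p q {hp hq} => [p1 p2] [q1 q2].
      rewrite /g /padd /=; lia.
    case: (IH a b Q _ hQ hcQ s1Q s2Q) => [|T0 [t0 [hr hA hV]]]; first by move: hn; rewrite addSn => -[].
    case: (step_up hd hA hV hP' hc') => T [t [hs hA' hV']].
    exists T, (padd t (p0.1, 0)); split=> //; last exact: vtrans_tr.
    by rewrite addSn; apply: reach_snoc hr hs.
Qed.

Lemma between (P : seq point) (f : point -> int) :
  shape_connected (adj_shape P) ->
  (forall x y, adjacent x y -> `|f x - f y| <= 1) ->
  forall a b, a \in P -> b \in P -> forall c, f a <= c <= f b ->
  exists2 r, r \in P & f r = c.
Proof.
move=> hc hf a b ha hb.
suff : a \in P -> b \in P /\ forall c, (f a <= c <= f b) \/ (f b <= c <= f a) ->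
   exists2 r, r \in P & f r = c.
  by move=> /(_ ha) [_ h] c hcc; apply: h; left.
elim: (hc a b ha hb) => [x y [hx hy hxy]|x|x y z _ IH1 _ IH2].
- move=> _; split=> // c hcc; have := hf _ _ hxy.
  case: (c =P f x) => h1.
  + by exists x.
  + by exists y => //; lia.
- by move=> hx; split=> // c hcc; exists x => //; lia.
- move=> hx; case: (IH1 hx) => hy h1; case: (IH2 hy) => hz h2; split=> // c hcc.
  have [h|h] : ((f x <= c <= f y) \/ (f y <= c <= f x)) \/
     ((f y <= c <= f z) \/ (f z <= c <= f y)) by lia.
  + exact: h1.
  + exact: h2.
Qed.

Lemma span_cols (P : seq point) (f : point -> int) :
  shape_connected (adj_shape P) ->
  (forall x y, adjacent x y -> `|f x - f y| <= 1) ->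
  forall p q, p \in P -> q \in P -> f p - f q < (size (undup (map f P)))%:Z.
Proof.
move=> hc hf p q hp hq.
case: (ltrP (f p) (f q)) => hpq; first by lia.
set k := `|f p - f q|%N.
set L := [seq f q + i%:Z | i <- iota 0 k.+1].
have hu : uniq L.
  rewrite map_inj_uniq ?iota_uniq // => i j /addrI; by case.
have hs : {subset L <= undup (map f P)}.
  move=> c /mapP [i]; rewrite mem_iota add0n => /andP [_ hi] ->.
  rewrite mem_undup; case: (between hc hf hq hp (c := f q + i%:Z)).
    rewrite /k in hi; lia.
  by move=> r hr <-; apply: map_f.
have := uniq_leq_size hu hs; rewrite size_map size_iota /k => h.
have h' : ((`|f p - f q|%N : int) < (size (undup [seq f i | i <- P]))%:Z) by rewrite ltz_nat.
exact: le_lt_trans (lez_abs (f p - f q)) h'.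
Qed.

Lemma adj_f1 x y : adjacent x y -> `|x.1 - y.1| <= 1.
Proof. rewrite /adjacent; lia. Qed.
Lemma adj_f2 x y : adjacent x y -> `|x.2 - y.2| <= 1.
Proof. rewrite /adjacent; lia. Qed.

Theorem theorem4p2 :
  exists C : nat, forall P : seq point,
    P != [::] -> shape_connected (adj_shape P) ->
    exists (tf : nat) (T : gshape),
      [/\ (tf <= C * (up_log 2 (nrows P) + up_log 2 (ncols P)))%N,
          reach tf single_node T & shape_equiv T (adj_shape P)].
Proof.
exists 1%N => P hP hc.
set a := up_log 2 (ncols P); set b := up_log 2 (nrows P).
have s1 : span1 P (2 ^ a).
  move=> p q hp hq; have := span_cols hc adj_f1 hp hq.
  have := up_logP (ncols P) (isT : (1 < 2)%N); rewrite -/a /ncols.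
  move: (2 ^ a)%N => k h1 h2; apply: (lt_le_trans h2); rewrite lez_nat; exact: h1.
have s2 : span2 P (2 ^ b).
  move=> p q hp hq; have := span_cols hc adj_f2 hp hq.
  have := up_logP (nrows P) (isT : (1 < 2)%N); rewrite -/b /nrows.
  move: (2 ^ b)%N => k h1 h2; apply: (lt_le_trans h2); rewrite lez_nat; exact: h1.
case: (grow_all erefl hP hc s1 s2) => T [t [hr hA hV]].
exists (a + b)%N, T; split=> //.
- by rewrite mul1n addnC.
- exact: equiv_of hA hV.
Qed.
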